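(* Let $k$ be any field, $A=kQ_A/I_A$ a monomial algebra with vertices $e_1,\dots,e_n$, and $B$ the algebra obtained by gluing the distinct non-isolated vertices $e_1,e_n$. Then $\mathrm{kspp}(1,n)\ge\mathrm{sp}(1,n)$. In particular, the number of special pairs is at least the number of special paths.
   Context: Monomial algebra: $A=kQ_A/I_A$, $Q_A$ finite quiver, $I_A$ admissible, generated by a minimal set $Z_A$ of paths of length $\ge2$; $\mathcal B_A$: paths (including trivial ones) avoiding elements of $Z_A$ as subpaths. Gluing: $B\subseteq A$ generated by $f_1=e_1+e_n$, $f_i=e_i$ ($2\le i\le n-1$) and all arrows; $B\cong kQ_B/I_B$, $Q_B$ obtained by identifying $e_1,e_n$ to $f_1$ (arrow $\alpha\mapsto\alpha^*$, path $p=a_m\cdots a_1\mapsto p^*=a_m^*\cdots a_1^*$, $e_1^*=e_n^*=f_1$), $I_B$ generated by $Z_B=\{r^*:r\in Z_A\}\cup\{b^*c^*: b,c\text{ arrows},\ t(c),s(b)\in\{e_1,e_n\},\ t(c)\ne s(b)\}$; $\mathcal B_B$ its basis paths. For path sets $X,Y$, $k(X\|Y)$ has basis the pairs $x\|y$ of parallel paths. For monomial $\Lambda=kQ/\langle Z\rangle$ with basis paths $\mathcal B$: $\delta^0(e\|\gamma)=\sum_{a\in Q_1,s(a)=e,a\gamma\in\mathcal B}a\|a\gamma-\sum_{a\in Q_1,t(a)=e,\gamma a\in\mathcal B}a\|\gamma a$; $\delta^1(a\|\gamma)=\sum_{r\in Z}r\|r^{a\|\gamma}$, where $r^{a\|\gamma}$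 is the sum over occurrences of $a$ in $r$ of the path obtained by replacing that occurrence by $\gamma$, keeping only paths in $\mathcal B$; subscripts $A,B$ indicate the algebra. A special path is a $p\in\mathcal B_A$ from $e_1$ to $e_n$ or from $e_n$ to $e_1$ with $\delta^0_B(f_1\|p^* )\ne0$ (equivalently $ap\notin I_A$ or $pa\notin I_A$ for some arrow $a$); $\mathrm{sp}(1,n)$ is their number. A special pair is $(\alpha,p)$, $\alpha$ an arrow starting or ending at $e_1$ or $e_n$, $p\in\mathcal B_A$, $\alpha^*$ parallel to $p^*$ in $Q_B$ but $\alpha$ not parallel to $p$ in $Q_A$. $Z_{spp}$ is the intersection of $\mathrm{Ker}\,\delta^1_B$ with the span of the $\alpha^*\|p^*$ over special pairs, and $\mathrm{kspp}(1,n)=\dim_kZ_{spp}$. *)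

(* Defs.v *)
From mathcomp Require Import all_boot all_algebra.
Set Implicit Arguments. Unset Strict Implicit. Unset Printing Implicit Defensive.
Import GRing.Theory.
Local Open Scope ring_scope.

(* A path is a pair (start vertex, list of arrows in traversal order):
   p = a_m ... a_1 is represented as (s a_1, [:: a_1; ...; a_m]); trivial path
   e_v is (v, [::]). *)
Section Paths.
Variables (V E : finType) (sf tf : E -> V).

Fixpoint walk (v : V) (l : seq E) : bool :=
  if l is a :: l' then (sf a == v) && walk (tf a) l' else true.

Definition pend (p : V * seq E) : V := last p.1 (map tf p.2).

Definition parallel (a : E) (p : V * seq E) : bool :=
  (sf a == p.1) && (tf a == pend p).

Definition ppar (p q : V * seq E) : bool := (p.1 == q.1) && (pend p == pend q).

Definition avoids (Z : seq (seq E)) (l : seq E) : bool := ~~ has (fun r => infix r l) Z.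

Fixpoint words (m : nat) : seq (seq E) :=
  if m is m'.+1 then [seq a :: w | a <- enum E, w <- words m'] else [:: [::]].

Definition words_below (N : nat) : seq (seq E) := flatten [seq words m | m <- iota 0 N].

(* basis paths: paths (starting at a vertex of verts) avoiding Z, of length < N.
   Under the admissibility hypothesis with bound N this is exactly the set of
   all paths avoiding Z. *)
Definition basis_paths (verts : seq V) (Z : seq (seq E)) (N : nat) : seq (V * seq E) :=
  [seq p <- [seq (v, l) | v <- verts, l <- words_below N] | walk p.1 p.2 && avoids Z p.2].
End Paths.

Section Gluing.
Variables (k : fieldType) (n : nat) (E : finType) (s t : E -> 'I_n.+2)
          (Z : seq (seq E)) (N : nat).

Definition e1 : 'I_n.+2 := ord0.
Definition en : 'I_n.+2 := ord_max.

(* vertices of Q_B are the vertices of Q_A other than e_n; f_1 is represented by e1 *)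
Definition glue (v : 'I_n.+2) : 'I_n.+2 := if v == en then e1 else v.
Definition sB (a : E) := glue (s a).
Definition tB (a : E) := glue (t a).

Definition vertsA : seq 'I_n.+2 := enum 'I_n.+2.
Definition vertsB : seq 'I_n.+2 := [seq v <- enum 'I_n.+2 | v != en].

Definition glued (v : 'I_n.+2) : bool := (v == e1) || (v == en).

(* Z_B = { r^* : r in Z_A } u { b^* c^* : t(c), s(b) in {e1,en}, t(c) <> s(b) }
   (b^* c^* is the path "c then b") *)
Definition ZB : seq (seq E) :=
  undup (Z ++ [seq [:: c; b] | c <- enum E,
                 b <- [seq b <- enum E | glued (t c) && glued (s b) && (t c != s b)]]).

Definition BA := basis_paths s t vertsA Z N.
Definition BB := basis_paths sB tB vertsB ZB N.

Definition star (p : 'I_n.+2 * seq E) : 'I_n.+2 * seq E := (glue p.1, p.2).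

Definition rpathB (r : seq E) : 'I_n.+2 * seq E :=
  (if r is a :: _ then sB a else e1, r).

(* basis of k(Q_1^B || B_B) and of k(Z_B || B_B) *)
Definition C1 : seq (E * ('I_n.+2 * seq E)) :=
  [seq (a, q) | a <- enum E, q <- [seq q <- BB | parallel sB tB a q]].
Definition C2 : seq (seq E * ('I_n.+2 * seq E)) :=
  [seq (r, q) | r <- ZB, q <- [seq q <- BB | ppar tB (rpathB r) q]].

Definition replace (r : seq E) (i : nat) (g : 'I_n.+2 * seq E) : 'I_n.+2 * seq E :=
  ((rpathB r).1, take i r ++ g.2 ++ drop i.+1 r).

(* coefficient of r||q in delta^1_B(a||g): number of occurrences of a in r whose
   replacement by g gives q (only basis paths q are recorded) *)
Definition d1coef (x : E * ('I_n.+2 * seq E)) (y : seq E * ('I_n.+2 * seq E)) : nat :=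
  count (fun i => (nth x.1 y.1 i == x.1) && (replace y.1 i x.2 == y.2)) (iota 0 (size y.1)).

(* delta^1_B as a matrix acting on row vectors in the basis C1, values in basis C2 *)
Definition delta1B : 'M[k]_(size C1, size C2) :=
  \matrix_(i, j) (d1coef (tnth (in_tuple C1) i) (tnth (in_tuple C2) j))%:R.

Definition delta0B (g : 'I_n.+2 * seq E) : 'rV[k]_(size C1) :=
  \row_j (let x := tnth (in_tuple C1) j in
          ((sB x.1 == e1) && (x.2 == (g.1, g.2 ++ [:: x.1])))%:R
        - ((tB x.1 == e1) && (x.2 == (sB x.1, x.1 :: g.2)))%:R).

Definition special_path (p : 'I_n.+2 * seq E) : bool :=
  [&& p \in BA,
      ((p.1 == e1) && (pend t p == en)) || ((p.1 == en) && (pend t p == e1))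
    & delta0B (star p) != 0].

Definition sp : nat := count special_path BA.

Definition special_pair (a : E) (p : 'I_n.+2 * seq E) : bool :=
  [&& glued (s a) || glued (t a), p \in BA,
      parallel sB tB a (star p) & ~~ parallel s t a p].

Definition special_pairs : seq (E * ('I_n.+2 * seq E)) :=
  [seq x <- [seq (a, p) | a <- enum E, p <- BA] | special_pair x.1 x.2].

Definition basis_vec (x : E * ('I_n.+2 * seq E)) : 'rV[k]_(size C1) :=
  \row_j (tnth (in_tuple C1) j == x)%:R.

Definition spp_span : 'M[k]_(size special_pairs, size C1) :=
  \matrix_(i, j) basis_vec (let x := tnth (in_tuple special_pairs) i in (x.1, star x.2)) 0 j.

Definition Zspp := (spp_span :&: kermx delta1B)%MS.

Definition kspp : nat := \rank Zspp.
End Gluing.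

(* Main.v *)
Require Import Defs.
From mathcomp Require Import all_boot all_algebra zify.
Set Implicit Arguments. Unset Strict Implicit. Unset Printing Implicit Defensive.
Import GRing.Theory.

Section G.
Variables (V E : finType) (sf tf : E -> V).

Lemma walk_cat v l1 l2 : walk sf tf v (l1 ++ l2) =
  walk sf tf v l1 && walk sf tf (last v (map tf l1)) l2.
Proof. by elim: l1 v => [|a l IH] v //=; rewrite IH andbA. Qed.

Lemma walk_cons_s v a l : walk sf tf v (a :: l) -> v = sf a.
Proof. by move=> /= /andP[/eqP]. Qed.

Lemma mem_words m l : (l \in words E m) = (size l == m).
Proof.
elim: m l => [|m IH] [|a l] //=.
- by apply/allpairsPdep => -[x [y [_ _ ]]].
apply/allpairsPdep/idP => [[x [y [_ yw [_ E2]]]]|]; first by rewrite E2 eqSS -IH.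
by move=> H; exists a, l; rewrite mem_enum IH.
Qed.

Lemma uniq_words m : uniq (words E m).
Proof.
elim: m => [|m IH] //=.
apply: allpairs_uniq => //; first exact: enum_uniq.
by move=> [a1 w1] [a2 w2] _ _ /= [-> ->].
Qed.

Lemma mem_words_below N l : (l \in words_below E N) = (size l < N).
Proof.
rewrite /words_below; apply/flatten_mapP/idP => [[m] | H].
  by rewrite mem_iota mem_words add0n => /andP[_ H] /eqP ->.
by exists (size l); rewrite ?mem_iota ?mem_words //.
Qed.

Lemma uniq_words_below N : uniq (words_below E N).
Proof.
elim: N => [|N IH] //.
rewrite /words_below -addn1 iotaD map_cat flatten_cat cat_uniq.
rewrite -/(words_below E N) IH /= cats0 uniq_words andbT /=.
apply/hasPn => l; rewrite mem_words add0n => /eqP <-.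
by rewrite mem_words_below ltnn.
Qed.

Lemma uniq_pairs (A B : eqType) (s : seq A) (f : A -> seq B) :
  uniq s -> (forall a, uniq (f a)) -> uniq [seq (a, b) | a <- s, b <- f a].
Proof.
elim: s => [|a s IH] //= /andP[Ha Hs] Hf.
rewrite cat_uniq IH // andbT (map_inj_uniq (fun x y (H : (a, x) = (a, y)) => congr1 snd H)) // Hf /=.
apply/hasPn => -[x y] /allpairsPdep [x' [y' [Hx' _ [-> _]]]].
by apply/mapP => -[z _ [E1 _]]; rewrite -E1 Hx' in Ha.
Qed.

End G.


Section M.
Variables (k : fieldType) (n : nat) (E : finType) (s t : E -> 'I_n.+2)
          (Z : seq (seq E)) (N : nat).

Local Notation ZB := (ZB s t Z).
Local Notation BB := (BB s t Z N).
Local Notation BA := (BA s t Z N).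
Local Notation C1 := (C1 s t Z N).
Local Notation sB := (sB s).
Local Notation tB := (tB t).
Local Notation e1 := (e1 n).
Local Notation en := (en n).

Lemma e1en : e1 != en.
Proof. by []. Qed.

Lemma mem_basis (V : finType) (sf tf : E -> V) verts Z' v l :
  ((v, l) \in basis_paths sf tf verts Z' N) =
  [&& v \in verts, size l < N, walk sf tf v l & avoids Z' l].
Proof.
rewrite /basis_paths mem_filter /=.
apply/andP/idP => [[H1 /allpairsPdep [v' [l' [Hv Hl [E1 E2]]]]]|].
  by rewrite E1 E2 Hv -mem_words_below Hl -E1 -E2.
move=> /and4P[Hv Hl Hw Ha]; rewrite Hw Ha; split => //.
by apply/allpairsPdep; exists v, l; rewrite mem_words_below.
Qed.

Lemma mem_BB v l : ((v, l) \in BB) =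
  [&& v != en, size l < N, walk sB tB v l & avoids ZB l].
Proof. by rewrite /BB mem_basis /vertsB mem_filter mem_enum andbT. Qed.

Lemma mem_BA v l : ((v, l) \in BA) =
  [&& size l < N, walk s t v l & avoids Z l].
Proof. by rewrite /BA mem_basis /vertsA mem_enum. Qed.

Lemma uniq_basis (V : finType) (sf tf : E -> V) verts Z' :
  uniq verts -> uniq (basis_paths sf tf verts Z' N).
Proof.
move=> Hv; apply: filter_uniq; apply: uniq_pairs => // _.
exact: uniq_words_below.
Qed.

Lemma uniq_BB : uniq BB.
Proof. by apply: uniq_basis; apply: filter_uniq; apply: enum_uniq. Qed.

Lemma uniq_BA : uniq BA.
Proof. by apply: uniq_basis; apply: enum_uniq. Qed.

Lemma uniq_C1 : uniq C1.
Proof.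
apply: uniq_pairs; first exact: enum_uniq.
by move=> a; apply: filter_uniq; apply: uniq_BB.
Qed.

Lemma Z_ZB r : r \in Z -> r \in ZB.
Proof. by move=> H; rewrite /ZB mem_undup mem_cat H. Qed.

Lemma pair_ZB c b : glued (t c) -> glued (s b) -> t c != s b -> [:: c; b] \in ZB.
Proof.
move=> H1 H2 H3; rewrite /ZB mem_undup mem_cat; apply/orP; right.
apply/allpairsPdep; exists c, b; split => //; first by rewrite mem_enum.
by rewrite mem_filter H1 H2 H3 mem_enum.
Qed.

Lemma avoids_infix (Z' : seq (seq E)) l l' : avoids Z' l -> infix l' l -> avoids Z' l'.
Proof.
move=> /hasPn H Hi; apply/hasPn => r Hr; apply: contra (H r Hr) => Hr'.
exact: infix_trans Hr' Hi.
Qed.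

End M.


Section M.
Variables (k : fieldType) (n : nat) (E : finType) (s t : E -> 'I_n.+2)
          (Z : seq (seq E)) (N : nat).

Local Notation ZB := (ZB s t Z).
Local Notation BB := (BB s t Z N).
Local Notation BA := (BA s t Z N).
Local Notation C1 := (C1 s t Z N).
Local Notation sB := (sB s).
Local Notation tB := (tB t).
Local Notation e1 := (e1 n).
Local Notation en := (en n).

Lemma glue_en v : glue v != en.
Proof. rewrite /glue; case: (v =P en) => [_|/eqP //]; exact: e1en. Qed.

Lemma glued_glue v : glued v -> glue v = e1.
Proof. by rewrite /glued /glue; case/orP => /eqP ->; rewrite ?eqxx // (negbTE e1en). Qed.

Lemma mem_C1 a w : ((a, w) \in C1) = (w \in BB) && parallel sB tB a w.
Proof.
apply/allpairsPdep/andP => [[a' [w' [_ ]]]|[H1 H2]].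
  by rewrite mem_filter => /andP[H1 H2] [-> ->].
by exists a, w; rewrite mem_enum mem_filter H1 H2.
Qed.

Lemma walk_nth (V : finType) (sf tf : E -> V) v l i a0 :
  walk sf tf v l -> i.+1 < size l -> sf (nth a0 l i.+1) = tf (nth a0 l i).
Proof.
elim: l v i => [|a l IH] v i //= /andP[_ Hw].
case: i => [|i] /=; first by case: l {IH} Hw => //= b l' /andP[/eqP].
by move=> Hi; apply: IH Hw _.
Qed.

Lemma walk_AB v l : walk s t v l -> walk sB tB (glue v) l.
Proof.
elim: l v => [|a l IH] v //= /andP[/eqP <- Hw].
by rewrite /sB eqxx IH.
Qed.

Lemma ZB_walk (HZw : forall r, r \in Z -> exists v, walk s t v r) r :
  r \in ZB -> exists v, walk sB tB v r.
Proof.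
rewrite /ZB mem_undup mem_cat => /orP[/HZw [v Hv]|].
  by exists (glue v); apply: walk_AB.
move=> /allpairsPdep [c [b [_ ]]]; rewrite mem_filter => /andP[/andP[/andP[H1 H2] H3] _] ->.
exists (sB c) => /=; rewrite eqxx /= /tB /sB !glued_glue //.
Qed.

Lemma avoids_ZB_Z l : avoids ZB l -> avoids Z l.
Proof.
move=> /hasPn H; apply/hasPn => r Hr; exact: H (Z_ZB _ _ Hr).
Qed.

Lemma core (g : 'I_n.+2 * seq E) (Hg : g.1 = e1) (r0 r1 : seq E) a b q v0 :
  q \in BB -> walk sB tB v0 (r0 ++ [:: a; b] ++ r1) ->
  [&& (b, (g.1, g.2 ++ [:: b])) \in C1, sB b == e1 & r0 ++ a :: g.2 ++ b :: r1 == q.2] =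
  [&& (a, (sB a, a :: g.2)) \in C1, tB a == e1 & r0 ++ a :: g.2 ++ b :: r1 == q.2].
Proof.
case: q => qv ql Hq Hwr /=.
have Hab : tB a = sB b.
  by move: Hwr; rewrite walk_cat => /andP[_] /= /and3P[_ /eqP ->].
rewrite Hab; case: (sB b =P e1) => Hb; last by rewrite /= !andbF.
case: (_ =P ql) => El; last by rewrite /= !andbF.
rewrite /= !andbT.
move: Hq; rewrite mem_BB => /and4P[Hqv Hqs Hqw Hqa].
rewrite !mem_C1 !mem_BB /parallel /pend /=.
rewrite -El in Hqs Hqw Hqa.
have Hw1 := Hqw; move: Hw1; rewrite walk_cat /= => /andP[_ /andP[_]].
rewrite walk_cat => /andP[Hwg /=] /andP[/eqP Hlast _].
rewrite map_cat last_cat /= Hg.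
have HL : tB a = e1 by rewrite Hab.
have Hs1 : size (g.2 ++ [:: b]) < N.
  by move: Hqs; rewrite !size_cat /= !size_cat /=; lia.

have Hinf1 : infix (g.2 ++ [:: b]) (r0 ++ a :: g.2 ++ b :: r1).
  have -> : r0 ++ a :: g.2 ++ b :: r1 = (r0 ++ [:: a]) ++ (g.2 ++ [:: b]) ++ r1.
    by rewrite -!catA.
  exact: infix_infix.
have Hinf2 : infix (a :: g.2) (r0 ++ a :: g.2 ++ b :: r1).
  have -> : r0 ++ a :: g.2 ++ b :: r1 = r0 ++ (a :: g.2) ++ (b :: r1).
    by [].
  exact: infix_infix.
transitivity true; [apply/and3P; split => //| symmetry; apply/and3P; split].
- apply/and4P; split => //.
    by rewrite walk_cat -HL Hwg /= -Hlast eqxx.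
  exact: avoids_infix Hqa Hinf1.
- by rewrite Hb.
- apply/and4P; split.
  + exact: glue_en.
  + by move: Hs1; rewrite size_cat addn1.
  + by rewrite eqxx.
  + exact: avoids_infix Hqa Hinf2.
- by [].
- by rewrite -Hlast Hab.
Qed.
End M.


Lemma count_sum (T : Type) (p : pred T) l : count p l = \sum_(x <- l) (p x : nat).
Proof. by elim: l => [|x l IH] /=; rewrite ?big_nil ?big_cons ?IH. Qed.

Lemma sum_pick (T : eqType) (l : seq T) (X : T) (K : nat) :
  uniq l -> \sum_(x <- l) ((x == X) * K) = (X \in l) * K.
Proof.
elim: l => [|x l IH] /=; first by rewrite big_nil.
move=> /andP[Hx Hl]; rewrite big_cons IH // in_cons eq_sym.
by case: eqP => [->|] /=; [rewrite (negbTE Hx) addn0 | rewrite add0n].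
Qed.

Section M.
Variables (k : fieldType) (n : nat) (E : finType) (s t : E -> 'I_n.+2)
          (Z : seq (seq E)) (N : nat).

Local Notation ZB := (ZB s t Z).
Local Notation BB := (BB s t Z N).
Local Notation C1 := (C1 s t Z N).
Local Notation sB := (sB s).
Local Notation tB := (tB t).
Local Notation e1 := (e1 n).
Local Notation en := (en n).

Lemma sum_d1 (c : E * ('I_n.+2 * seq E) -> bool) (X : E -> E * ('I_n.+2 * seq E))
   (cc : E -> bool) (y : seq E * ('I_n.+2 * seq E)) a0 :
 (forall x a, c x && (x.1 == a) = (x == X a) && cc a) ->
 (forall a, (X a).1 = a) ->
 \sum_(x <- C1) c x * d1coef s x y =
 \sum_(i <- iota 0 (size y.1)) [&& X (nth a0 y.1 i) \in C1, cc (nth a0 y.1 i)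
      & replace s y.1 i (X (nth a0 y.1 i)).2 == y.2].
Proof.
move=> HcX HX1.
rewrite /d1coef.
under eq_bigr do rewrite count_sum big_distrr /=.
rewrite exchange_big /=; apply: eq_big_seq => i; rewrite mem_iota add0n => /andP[_ Hi].
transitivity (\sum_(x <- C1) ((x == X (nth a0 y.1 i)) *
   (cc (nth a0 y.1 i) && (replace s y.1 i (X (nth a0 y.1 i)).2 == y.2)))).
  apply: eq_bigr => x _.
  rewrite (set_nth_default a0) // !mulnb andbA (eq_sym _ x.1) HcX.
  by case: eqP => [->|] //=; rewrite andbA.
by rewrite sum_pick ?uniq_C1 // mulnb.
Qed.


Lemma iota_shift (F G : nat -> nat) m :
  F 0 = 0 -> G m = 0 -> (forall i, i < m -> F i.+1 = G i) ->
  \sum_(i <- iota 0 m.+1) F i = \sum_(i <- iota 0 m.+1) G i.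
Proof.
move=> HF HG HFG.
have H1 : iota 0 m.+1 = 0 :: iota 1 m by [].
have H2 : iota 0 m.+1 = iota 0 m ++ [:: m].
  have -> : [:: m] = iota (0 + m) 1 by [].
  by rewrite -iotaD addn1.
rewrite [in LHS]H1 [in RHS]H2 big_cons big_cat big_seq1 HF HG add0n Monoid.mulm1.
rewrite -[1]addn0 iotaDl big_map; apply: eq_big_seq => i; rewrite mem_iota add0n.
by move=> Hi; rewrite add1n HFG.
Qed.

Lemma ker_delta (HZw : forall r, r \in Z -> exists v, walk s t v r)
  (g : 'I_n.+2 * seq E) (Hg : g.1 = e1) :
  (delta0B k s t Z N g *m delta1B k s t Z N = 0)%R.
Proof.
apply/rowP => j; rewrite !mxE.
set y := tnth (in_tuple (Defs.C2 s t Z N)) j.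
have Hy : y \in Defs.C2 s t Z N by apply: mem_tnth.
under eq_bigr do rewrite !mxE /= mulrBl -!natrM.
rewrite sumrB -!natr_sum; apply/eqP; rewrite subr_eq0; apply/eqP; congr (_%:R)%R.
have HT : forall F : E * ('I_n.+2 * seq E) -> nat,
   \sum_(i < size C1) F (tnth (in_tuple C1) i) = \sum_(x <- C1) F x.
  by move=> F; rewrite big_tnth.
rewrite (HT (fun x => ((sB x.1 == e1) && (x.2 == (g.1, g.2 ++ [:: x.1]))) * d1coef s x y)).
rewrite (HT (fun x => ((tB x.1 == e1) && (x.2 == (sB x.1, x.1 :: g.2))) * d1coef s x y)).
clearbody y; case: y Hy => r q /allpairsPdep [r' [q' [Hr Hq [-> ->]]]] {r q}.
move: Hq; rewrite mem_filter => /andP[Hpp Hq].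
have [v0 Hwr] := ZB_walk HZw Hr.
case Er: r' => [|a0 r''].
  by rewrite !big1 // => x _; rewrite /d1coef /= muln0.
have Hsz : size r' = (size r'').+1 by rewrite Er.
rewrite -Er.
rewrite (@sum_d1 (fun x => (sB x.1 == e1) && (x.2 == (g.1, g.2 ++ [:: x.1])))
   (fun a => (a, (g.1, g.2 ++ [:: a]))) (fun a => sB a == e1) _ a0); last 2 first.
- move=> [b w] a /=; case: (b =P a) => [->|/eqP Hba].
    by rewrite andbT xpair_eqE eqxx /= andbC.
  by rewrite andbF xpair_eqE (negbTE Hba).
- by [].
rewrite (@sum_d1 (fun x => (tB x.1 == e1) && (x.2 == (sB x.1, x.1 :: g.2)))
   (fun a => (a, (sB a, a :: g.2))) (fun a => tB a == e1) _ a0); last 2 first.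
- move=> [b w] a /=; case: (b =P a) => [->|/eqP Hba].
    by rewrite andbT xpair_eqE eqxx /= andbC.
  by rewrite andbF xpair_eqE (negbTE Hba).
- by [].
rewrite /= Hsz.
have Hrep : forall i w, (replace s r' i w == q') = (take i r' ++ w.2 ++ drop i.+1 r' == q'.2).
  move=> i w; rewrite /replace; case: q' Hpp {Hq} => qv ql /andP[/eqP /= -> _].
  by rewrite xpair_eqE eqxx.
have Havoid : forall l1 l2, (l1 ++ r' ++ l2 == q'.2) = false.
  move=> l1 l2; apply/negbTE/eqP => Eq.
  case: q' Hq Eq {Hpp Hrep} => qv ql; rewrite mem_BB => /and4P[_ _ _ /hasPn Ha] /= Eq.
  by move: (Ha r' Hr); rewrite -Eq infix_infix.
apply: iota_shift.
- rewrite Hrep; move: (Havoid g.2 [::]); rewrite cats0 Er /= -catA /= drop0 => ->.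
  by rewrite !andbF.
- rewrite Hrep /=.
  have Ht : take (size r'') r' ++ [:: nth a0 r' (size r'')] = r'.
    by rewrite cats1 -take_nth ?Hsz // take_oversize ?Hsz.
  have Hd : drop (size r'').+1 r' = [::] by rewrite drop_oversize ?Hsz.
  rewrite Hd cats0 -cat1s catA Ht; move: (Havoid [::] g.2); rewrite /= => ->.
  by rewrite !andbF.
move=> i Hi; congr nat_of_bool; rewrite !Hrep /=.
have Hi1 : i.+1 < size r' by rewrite Hsz.
have Hi0 : i < size r' by rewrite ltnW.
set a := nth a0 r' i; set b := nth a0 r' i.+1.
have Htk : take i.+1 r' = take i r' ++ [:: a] by rewrite (take_nth a0) // cats1.
have Hdr : drop i.+1 r' = b :: drop i.+2 r' by rewrite (drop_nth a0).
have Hr' : r' = take i r' ++ [:: a; b] ++ drop i.+2 r'.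
  by rewrite -{1}(cat_take_drop i r') (drop_nth a0) // Hdr.
rewrite Htk Hdr -!catA /=.
apply: core => //.
by rewrite -Hr'; exact: Hwr.
Qed.


End M.


Section M.
Variables (k : fieldType) (n : nat) (E : finType) (s t : E -> 'I_n.+2)
          (Z : seq (seq E)) (N : nat).

Local Notation ZB := (ZB s t Z).
Local Notation BB := (BB s t Z N).
Local Notation BA := (BA s t Z N).
Local Notation C1 := (C1 s t Z N).
Local Notation sB := (sB s).
Local Notation tB := (tB t).
Local Notation e1 := (e1 n).
Local Notation en := (en n).
Local Notation special_path := (special_path k s t Z N).

Definition cplus (g : 'I_n.+2 * seq E) (x : E * ('I_n.+2 * seq E)) :=
  (sB x.1 == e1) && (x.2 == (g.1, g.2 ++ [:: x.1])).
Definition cminus (g : 'I_n.+2 * seq E) (x : E * ('I_n.+2 * seq E)) :=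
  (tB x.1 == e1) && (x.2 == (sB x.1, x.1 :: g.2)).

Lemma glue_e1 v : glue v = e1 -> glued v.
Proof. rewrite /glue /glued => H; apply/orP; case: (v =P en) H => [-> _|_ ->]; by [right|left]. Qed.

Lemma sp_facts p : special_path p ->
  [/\ p \in BA, glued p.1, glued (pend t p), p.1 != pend t p & p.2 != [::]].
Proof.
case: p => v l /and3P[HBA Hend _] /=.
have [H1 H2 H3] : [/\ glued v, glued (pend t (v, l)) & v != pend t (v, l)].
  case/orP: Hend => /= /andP[/eqP -> /eqP ->]; rewrite /glued !eqxx ?orbT //.
split => //; apply: contra H3 => /eqP El; move: El => -> .
by rewrite /pend.
Qed.

Lemma rot (v1 v2 : 'I_n.+2) l1 l2 a : walk s t v1 l1 -> walk s t v2 l2 ->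
  l1 ++ [:: a] = a :: l2 ->
  l1 = l2 \/ (pend t (v1, l1) = v1 /\ pend t (v2, l2) = v2).
Proof.
case: l1 => [|b u] /=.
  by move=> _ _ [<-]; left.
move=> /andP[/eqP Hv1 Hw1] Hw2 [Eab Eu]; subst b.
case: u Hw1 Eu => [|c u] Hw1 Eu; first by left; rewrite -Eu.
right.
move: Hw2; rewrite -Eu walk_cat => /andP[Hw2 /=] /andP[/eqP Hlast _].
move: Hw1 => /= /andP[/eqP Hc Hw1].
move: Hw2 => /= /andP[/eqP Hc2 _].
rewrite /pend /= map_cat last_cat /=.
by split; [rewrite -Hlast | rewrite -Hc Hc2].
Qed.


Lemma spp_from p x : special_path p -> x \in C1 ->
  cplus (star p) x || cminus (star p) x ->
  exists p', (x.1, p') \in special_pairs s t Z N /\ star p' = x.2.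
Proof.
move=> Hsp; have [HBA Hg1 Hg2 Hne Hnil] := sp_facts Hsp.
move: HBA Hg1 Hg2 Hne Hnil {Hsp}; case: p => v l /= HBA Hg1 Hg2 Hne Hnil.
move: HBA; rewrite mem_BA => /and3P[Hsz Hw Hav].
case: x => a w; rewrite mem_C1 => /andP[HwB Hpar] /=.
have HSP : forall p', special_pair s t Z N a p' -> (a, p') \in special_pairs s t Z N.
  move=> p' Hp'; rewrite mem_filter Hp' /=.
  apply: allpairs_f; rewrite ?mem_enum //.
  by case/and4P: Hp'.
rewrite /cplus /cminus /=.
case/orP => /andP[/eqP Ha /eqP Ew]; subst w.
- move: HwB; rewrite mem_BB => /and4P[_ Hsz' Hw' Hav'].
  have Hsa : s a = pend t (v, l).
    apply/eqP; apply: contraT => Hneq.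
    move: Hnil Hav' Hneq Hg2; case/lastP: l {Hsz Hw Hpar Hsz' Hw' Hne Hav} => [|l' c] // _ Hav' Hneq Hg2.
    have Htc : pend t (v, rcons l' c) = t c by rewrite /pend /= map_rcons last_rcons.
    rewrite Htc in Hneq Hg2.
    have HZ : [:: c; a] \in ZB.
      by apply: pair_ZB => //; [apply: glue_e1 | rewrite eq_sym].
    move/hasPn: Hav' => /(_ _ HZ); rewrite -cats1 -catA /=.
    by rewrite infix_infix.
  exists (v, l ++ [:: a]); split => //; apply: HSP.
  apply/and4P; split.
  + by rewrite glue_e1.
  + by rewrite mem_BA Hsz' walk_cat Hw /= Hsa eqxx /= (avoids_ZB_Z Hav').
  + exact: Hpar.
  + by rewrite /parallel /= Hsa eq_sym (negbTE Hne).
- move: HwB; rewrite mem_BB => /and4P[_ Hsz' Hw' Hav'].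
  have Hta : t a = v.
    move: Hnil Hw Hav' Hg1; case: l {Hsz Hpar Hsz' Hw' Hne Hg2 Hav} => [|c l'] // _ Hw Hav' Hg1.
    have Hsc := walk_cons_s Hw.
    apply/eqP; apply: contraT => Hneq.
    have HZ : [:: a; c] \in ZB.
      by apply: pair_ZB; [apply: glue_e1 | rewrite -Hsc | rewrite -Hsc].
    move/hasPn: Hav' => /(_ _ HZ).
    by rewrite -[a :: c :: l']/([:: a; c] ++ l') prefix_infix.
  exists (s a, a :: l); split => //; apply: HSP.
  apply/and4P; split.
  + by rewrite (glue_e1 Ha) orbT.
  + by rewrite mem_BA Hsz' /= eqxx Hta Hw /= (avoids_ZB_Z Hav').
  + exact: Hpar.
  + by rewrite /parallel /pend /= Hta eqxx /= (negbTE Hne).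
Qed.


Lemma private p p'' x : special_path p -> special_path p'' -> p != p'' ->
  cplus (star p) x || cminus (star p) x ->
  cplus (star p'') x = false /\ cminus (star p'') x = false.
Proof.
move=> Hsp Hsp'' Hneq.
have [HBA _ _ Hne Hnil] := sp_facts Hsp.
have [HBA'' _ _ Hne'' Hnil''] := sp_facts Hsp''.
move: HBA HBA'' Hne Hne'' Hnil Hnil'' Hneq {Hsp Hsp''}.
case: p => v l; case: p'' => v'' l''.
rewrite !mem_BA => /and3P[_ Hw _] /and3P[_ Hw'' _] /= Hne Hne'' Hnil Hnil'' Hneq.
have Hsame : l = l'' -> False.
  move=> El; subst l''; move/eqP: Hneq; apply.
  case: l Hw Hw'' Hnil {Hne Hne'' Hnil''} => [|c l] // Hw Hw'' _.
  by rewrite (walk_cons_s Hw) (walk_cons_s Hw'').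
case: x => a w; rewrite /cplus /cminus /=.
case/orP => /andP[_ /eqP ->]; split; apply/negbTE/negP => /andP[_ /eqP].
- by case => _ /eqP; rewrite !cats1 eqseq_rcons eqxx andbT => /eqP /Hsame.
- case => _ E2; case: (rot Hw Hw'' E2) => [/Hsame //|[Hp _]].
  by move/eqP: Hne; rewrite Hp.
- case => _ E2; case: (rot Hw'' Hw (esym E2)) => [/esym /Hsame //|[_ Hp]].
  by move/eqP: Hne; rewrite Hp.
- by case => /Hsame.
Qed.

End M.


Section M.
Variables (k : fieldType) (n : nat) (E : finType) (s t : E -> 'I_n.+2)
          (Z : seq (seq E)) (N : nat).

Local Notation ZB := (ZB s t Z).
Local Notation BB := (BB s t Z N).
Local Notation BA := (BA s t Z N).
Local Notation C1 := (C1 s t Z N).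
Local Notation sB := (sB s).
Local Notation tB := (tB t).
Local Notation e1 := (e1 n).
Local Notation en := (en n).
Local Notation special_path := (special_path k s t Z N).
Local Notation delta0B := (delta0B k s t Z N).
Local Notation spp_span := (spp_span k s t Z N).
Local Open Scope ring_scope.

Lemma delta0B_E g j : delta0B g 0 j =
  ((cplus s g (tnth (in_tuple C1) j))%:R - (cminus s t g (tnth (in_tuple C1) j))%:R)%R.
Proof. by rewrite mxE. Qed.

Lemma nz_cond g j : delta0B g 0 j != 0%R ->
  cplus s g (tnth (in_tuple C1) j) || cminus s t g (tnth (in_tuple C1) j).
Proof.
rewrite delta0B_E; apply: contraR; rewrite negb_or => /andP[/negbTE -> /negbTE ->].
by rewrite subrr.
Qed.

Lemma in_span p : special_path p -> (delta0B (star p) <= spp_span)%MS.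
Proof.
move=> Hsp; rewrite [delta0B _]row_sum_delta; apply: summx_sub => j _.
case: (delta0B (star p) 0 j =P 0%R) => [->|/eqP Hj]; first by rewrite scale0r sub0mx.
apply: scalemx_sub.
set x := tnth (in_tuple C1) j.
have Hc := nz_cond Hj.
have [p' [Hp' Hstar]] := spp_from Hsp (mem_tnth j (in_tuple C1)) Hc.
have /tnthP [i Ei] : (x.1, p') \in in_tuple (special_pairs s t Z N) := Hp'.
have -> : delta_mx 0 j = row i spp_span.
  apply/rowP => j'; rewrite !mxE /basis_vec -Ei /= Hstar -surjective_pairing.
  rewrite /x !(tnth_nth x) /= nth_uniq ?uniq_C1 // eq_sym.
by apply: row_sub.
Qed.

End M.

Lemma tnth_neq (T : eqType) (l : seq T) (i i' : 'I_(size l)) :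
  uniq l -> i' != i -> tnth (in_tuple l) i != tnth (in_tuple l) i'.
Proof.
move: i i'; case: l => [|x0 l] i i' Hu Hi; first by case: i {Hi}.
rewrite !(tnth_nth x0) nth_uniq //.
by rewrite eq_sym.
Qed.

Theorem corollary3p23 (k : fieldType) (n : nat) (E : finType) (s t : E -> 'I_n.+2)
    (Z : seq (seq E)) (N : nat)
    (HZ : forall r, r \in Z -> (2 <= size r)%N /\ exists v, walk s t v r)
    (Hmin : uniq Z /\ forall r r', r \in Z -> r' \in Z -> infix r r' -> r = r')
    (Hadm : forall v l, walk s t v l -> (N <= size l)%N -> exists2 r, r \in Z & infix r l)
    (H1 : exists a, (s a == e1 n) || (t a == e1 n))
    (Hn : exists a, (s a == en n) || (t a == en n)) :
  (sp k s t Z N <= kspp k s t Z N)%N /\ (sp k s t Z N <= size (special_pairs s t Z N))%N.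
Proof.
Local Open Scope ring_scope.
have HZw : forall r, r \in Z -> exists v, walk s t v r by move=> r /HZ [].
set S := [seq p <- BA s t Z N | special_path k s t Z N p].
have HS : forall i, special_path k s t Z N (tnth (in_tuple S) i).
  by move=> i; have := mem_tnth i (in_tuple S); rewrite mem_filter => /andP[].
have HSu : uniq S by apply: filter_uniq; apply: uniq_BA.
pose D : 'M[k]_(size S, size (C1 s t Z N)) :=
  (\matrix_(i, j) delta0B k s t Z N (star (tnth (in_tuple S) i)) 0 j)%R.
have HrowD : forall i, row i D = delta0B k s t Z N (star (tnth (in_tuple S) i)).
  by move=> i; apply/rowP => j; rewrite !mxE.
have HDsub : (D <= Zspp k s t Z N)%MS.
  apply/row_subP => i; rewrite HrowD sub_capmx; apply/andP; split.
    exact: in_span.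
  apply/sub_kermxP; apply: ker_delta => //.
  have [_ Hg _ _ _] := sp_facts (HS i).
  by rewrite /star /= glued_glue.
have Hfree : row_free D.
  rewrite -kermx_eq0; apply/rowV0P => u /sub_kermxP Hu.
  apply/rowP => i; rewrite mxE.
  have Hsp := HS i.
  have [j Hj] : exists j, delta0B k s t Z N (star (tnth (in_tuple S) i)) 0 j != 0%R.
    apply/existsP; apply: contraT; rewrite negb_exists => /forallP H.
    move/and3P: Hsp => [_ _ /eqP]; case; apply/rowP => j; rewrite [RHS]mxE.
    by apply/eqP; move: (H j); rewrite negbK.
  have Hc := nz_cond Hj.
  move/rowP/(_ j): Hu; rewrite [X in _ = X]mxE mxE (bigD1 i) //.
  rewrite (@big1 _ _ _ _ _ _ (fun i' => u 0 i' * D i' j)); last first.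
    move=> i' /= Hi'; rewrite /D mxE delta0B_E.
    have Hne := tnth_neq HSu Hi'.
    have [-> ->] := private Hsp (HS i') Hne Hc.
    by rewrite subrr mulr0.
  rewrite Monoid.mulm1 /D mxE => /eqP; rewrite mulf_eq0 (negbTE Hj) orbF => /eqP.
  exact: id.
rewrite /sp -size_filter -/S.
have H1' : (size S <= kspp k s t Z N)%N.
  rewrite -(eqP Hfree); exact: mxrankS HDsub.
split; first exact: H1'.
apply: leq_trans H1' _; rewrite /kspp.
apply: leq_trans (rank_leq_row (spp_span k s t Z N)).
apply: mxrankS; exact: capmxSl.
Qed.
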